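(* Let $\Omega\subset\mathbb{Z}_2^n\setminus\{\mathbf 0\}$ be nonempty and such that every $\beta\in\Omega$ has even Hamming weight. Then the transition matrix $H_\Omega(t)$ of $\mathrm{NEPS}(P_3,\ldots,P_3;\Omega)$ satisfies $H_\Omega(\pi)=I$; in particular the graph is periodic at $\pi$.
   Context: $P_3$ is the path on three vertices. For graphs $G_1,\dots,G_n$ and $\Omega\subset\mathbb{Z}_2^n\setminus\{\mathbf 0\}$, $\mathrm{NEPS}(G_1,\dots,G_n;\Omega)$ is the graph on $V(G_1)\times\cdots\times V(G_n)$ with adjacency matrix $\sum_{\beta\in\Omega}A_1^{\beta_1}\otimes\cdots\otimes A_n^{\beta_n}$, $A_i$ the adjacency matrix of $G_i$. The Hamming weight of $\beta$ is its number of entries equal to $1$. The transition matrix of a graph with adjacency matrix $A$ is $H(t)=\exp(-itA)$; a graph is periodic at $\tau\ne0$ if $H(\tau)=\gamma I$ with $|\gamma|=1$. *)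

(* Defs.v *)
From Stdlib Require Import Reals Factorial.
From mathcomp Require Import all_boot.
Set Implicit Arguments. Unset Strict Implicit. Unset Printing Implicit Defensive.

Definition adjmx (T : finType) := T -> T -> nat.

Definition P3_adj : adjmx 'I_3 :=
  fun i j => nat_of_bool (((i : nat).+1 == j) || ((j : nat).+1 == i)).

(* A^0 = I, A^1 = A (beta_i in {0,1}). *)
Definition adj_pow01 (T : finType) (A : adjmx T) (b : bool) : adjmx T :=
  fun u v => if b then A u v else nat_of_bool (u == v).

Definition hamming_weight (n : nat) (beta : {ffun 'I_n -> bool}) : nat :=
  #|[set i | beta i]|.

(* Adjacency matrix of NEPS(G,...,G; Omega) (n copies of G with adjacency A),
   on vertex set V(G)^n: entry (u,v) of
   sum_{beta in Omega} A^{beta_1} (x) ... (x) A^{beta_n}. *)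
Definition neps_adj (n : nat) (T : finType) (A : adjmx T)
  (Om : {set {ffun 'I_n -> bool}}) : adjmx {ffun 'I_n -> T} :=
  fun u v => (\sum_(beta in Om) \prod_(i < n) adj_pow01 A (beta i) (u i) (v i))%N.

Fixpoint mxpow (T : finType) (A : adjmx T) (k : nat) : adjmx T :=
  match k with
  | 0 => fun u v => nat_of_bool (u == v)
  | k'.+1 => fun u v => (\sum_(w : T) mxpow A k' u w * A w v)%N
  end.

Local Open Scope R_scope.

(* Complex numbers as (Re, Im) pairs of reals. *)
Definition C := (R * R)%type.
Definition Cmul (z w : C) : C :=
  (Rminus (Rmult (fst z) (fst w)) (Rmult (snd z) (snd w)),
   Rplus (Rmult (fst z) (snd w)) (Rmult (snd z) (fst w))).
Definition Cnorm2 (z : C) : R := Rplus (Rmult (fst z) (fst z)) (Rmult (snd z) (snd z)).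

Fixpoint negi_pow (k : nat) : C :=
  match k with
  | 0 => (R1, R0)
  | k'.+1 => Cmul (R0, Ropp R1) (negi_pow k')
  end.

(* k-th term of the entry (u,v) of exp(-itA) = sum_k (-itA)^k / k!,
   i.e. (-i)^k * t^k * (A^k)_{uv} / k!. *)
Definition exp_term (T : finType) (A : adjmx T) (t : R) (u v : T) (k : nat) : C :=
  Cmul (negi_pow k) (Rdiv (Rmult (pow t k) (INR (mxpow A k u v))) (INR (fact k)), R0).

(* transition_entry A t u v z : the (u,v) entry of H(t) = exp(-itA) equals z,
   i.e. the exponential series converges (componentwise) to z. *)
Definition transition_entry (T : finType) (A : adjmx T) (t : R) (u v : T) (z : C) : Prop :=
  Un_cv (fun N => sum_f_R0 (fun k => fst (exp_term A t u v k)) N) (fst z) /\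
  Un_cv (fun N => sum_f_R0 (fun k => snd (exp_term A t u v k)) N) (snd z).

Definition transition_is_scalar (T : finType) (A : adjmx T) (t : R) (gamma : C) : Prop :=
  forall u v : T, transition_entry A t u v
    (Cmul gamma (INR (nat_of_bool (u == v)), R0)).

Definition periodic_at (T : finType) (A : adjmx T) (tau : R) : Prop :=
  tau <> R0 /\ exists gamma : C, Cnorm2 gamma = R1 /\ transition_is_scalar A tau gamma.

(* Main.v *)
Require Import Defs.
From Stdlib Require Import Reals Factorial Lra Lia.
From mathcomp Require Import all_boot zify.
Local Open Scope R_scope.

Lemma negi_even m : negi_pow (2 * m)%coq_nat = ((-1)^m, 0).
Proof.
induction m as [|m IH]; first by [].
replace (2 * S m)%coq_nat with (S (S (2 * m)%coq_nat)) by lia.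
rewrite /= IH /Cmul /=; f_equal; ring.
Qed.

Lemma negi_odd m : negi_pow (S (2 * m)%coq_nat) = (0, - (-1)^m).
Proof. rewrite /= negi_even /Cmul /=; f_equal; ring. Qed.

Lemma cv_evenodd (u : nat -> R) l :
  Un_cv (fun m => u (2 * m)%coq_nat) l -> Un_cv (fun m => u (S (2 * m)%coq_nat)) l ->
  Un_cv u l.
Proof.
move=> H1 H2 eps Heps.
case: (H1 eps Heps) => N1 HN1; case: (H2 eps Heps) => N2 HN2.
exists (2 * (N1 + N2))%coq_nat => n Hn.
case: (Nat.Even_or_Odd n) => [[m Hm]|[m Hm]].
- have -> : n = (2 * m)%coq_nat by lia. apply: HN1. unfold ge in *. lia.
- have -> : n = S (2 * m)%coq_nat by lia. apply: HN2; unfold ge in *; lia.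
Qed.

Definition cterm x k := fst (negi_pow k) * (x ^ k / INR (fact k)).
Definition sterm x k := snd (negi_pow k) * (x ^ k / INR (fact k)).

Lemma cterm_cos x : Un_cv (fun N => sum_f_R0 (cterm x) N) (cos x).
Proof.
have Hc : infinite_sum (fun i => cos_n i * (Rsqr x) ^ i) (cos x).
  by rewrite /cos; case: (exist_cos (Rsqr x)).
have E : forall m, sum_f_R0 (cterm x) (2 * m)%coq_nat = sum_f_R0 (fun i => cos_n i * (Rsqr x) ^ i) m.
  elim=> [|m IH].
    by rewrite /= /cterm /cos_n /=; field.
  replace (2 * S m)%coq_nat with (S (S (2 * m)%coq_nat)) by lia.
  rewrite !tech5 IH /cterm negi_odd.
  rewrite (_ : negi_pow (S (S (2*m)%coq_nat)) = Cmul (0,-1) (negi_pow (S (2*m)%coq_nat))) // negi_odd.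
  rewrite /cos_n /Rsqr (_ : x * x = x ^ 2); last by ring.
  rewrite -pow_mult.
  replace (2 * S m)%coq_nat with (S (S (2 * m)%coq_nat)) by lia.
  rewrite /Cmul; cbn [fst snd]. change ((-1)^(S m)) with (-1 * (-1)^m). field. split; apply not_0_INR; apply fact_neq_0.
apply: cv_evenodd.
  move=> eps He; case: (Hc eps He) => N HN; exists N => n Hn; rewrite E; exact: HN.
move=> eps He; case: (Hc eps He) => N HN; exists N => n Hn.
rewrite tech5 E /cterm negi_odd /=. replace (0 * _) with 0 by ring.
rewrite Rplus_0_r; exact: HN.
Qed.

Lemma cv_const c : Un_cv (fun _ => c) c.
Proof. move=> eps He; exists 0%nat => n _; rewrite /Rdist Rminus_diag Rabs_R0; lra. Qed.

Lemma sterm_sin x : Un_cv (fun N => sum_f_R0 (sterm x) N) (- sin x).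
Proof.
have [a Ha Hs] : exists2 a, infinite_sum (fun i => sin_n i * (Rsqr x) ^ i) a & sin x = x * a.
  by rewrite /sin; case: (exist_sin (Rsqr x)) => a Ha; exists a.
have E : forall m, sum_f_R0 (sterm x) (S (2 * m)%coq_nat) = - x * sum_f_R0 (fun i => sin_n i * (Rsqr x) ^ i) m.
  elim=> [|m IH].
    rewrite /= /sterm /sin_n /=; field.
  replace (2 * S m)%coq_nat with (S (S (2 * m)%coq_nat)) by lia.
  rewrite tech5 tech5 IH /sterm.
  rewrite (_ : negi_pow (S (S (2*m)%coq_nat)) = Cmul (0,-1) (negi_pow (S (2*m)%coq_nat))) // negi_odd.
  rewrite (_ : negi_pow (S (S (S (2*m)%coq_nat))) = Cmul (0,-1) (Cmul (0,-1) (negi_pow (S (2*m)%coq_nat)))) // negi_odd.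
  rewrite /sin_n /Rsqr (_ : x * x = x ^ 2); last by ring.
  rewrite tech5 -pow_mult.
  replace (2 * S m + 1)%coq_nat with (S (S (S (2 * m)%coq_nat))) by lia.
  replace (2 * S m)%coq_nat with (S (S (2 * m)%coq_nat)) by lia.
  rewrite /Cmul; cbn [fst snd]. change ((-1)^(S m)) with (-1 * (-1)^m).
  change (x ^ (S (S (S (2 * m)%coq_nat)))) with (x * x ^ (S (S (2 * m)%coq_nat))).
  replace ((S (S (2*m)%coq_nat)) + 1)%coq_nat with (S (S (S (2 * m)%coq_nat))) by lia. field. split; apply not_0_INR; apply fact_neq_0.
have HD : Un_cv (fun m => - x * sum_f_R0 (fun i => sin_n i * (Rsqr x) ^ i) m) (- sin x).
  rewrite Hs (_ : - (x * a) = - x * a); last by ring.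
  apply: CV_mult; first exact: cv_const. exact: Ha.
apply: cv_evenodd; last first.
  by move=> eps He; case: (HD eps He) => N HN; exists N => n Hn; rewrite E; exact: HN.
apply: (CV_shift _ 1).
move=> eps He; case: (HD eps He) => N HN; exists N => n Hn.
replace (sum_f_R0 (sterm x) _) with (sum_f_R0 (sterm x) (S (S (2*n)%coq_nat))) by (f_equal; lia).
rewrite tech5 E /sterm.
rewrite (_ : negi_pow (S (S (2*n)%coq_nat)) = Cmul (0,-1) (negi_pow (S (2*n)%coq_nat))) // negi_odd.
rewrite /Cmul; cbn [fst snd].
replace ((0 * - (-1) ^ n + -1 * 0) * _) with 0 by ring.
rewrite Rplus_0_r; exact: HN.
Qed.

From mathcomp Require Import all_order all_algebra ring lra.
From mathcomp Require Import Rstruct.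
Import Order.TTheory GRing.Theory Num.Theory.
Set Implicit Arguments. Unset Strict Implicit. Unset Printing Implicit Defensive.
Local Open Scope ring_scope.

Definition s2 : R := sqrt 2.
Lemma s2s2 : s2 * s2 = 2.
Proof. rewrite /s2 -RmultE sqrt_sqrt; first by rewrite -INRE. left; exact: Rlt_0_2. Qed.

Definition xv (j a : 'I_3) : R :=
  nth 0 (nth [::] [:: [:: 1/2; s2/2; 1/2]; [:: s2/2; 0; -(s2/2)]; [:: 1/2; -(s2/2); 1/2]] j) a.
Definition mu (j : 'I_3) : R := nth 0 [:: s2; 0; -s2] j.
Definition mup (b : bool) (x : R) : R := if b then x else 1.

Lemma eig3 (j c : 'I_3) (b : bool) :
  \sum_(a < 3) xv j a * (adj_pow01 P3_adj b a c)%:R = mup b (mu j) * xv j c.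
Proof.
have H := s2s2.
rewrite !big_ord_recl big_ord0.
case: b; case: j => [[|[|[|j]]] Hj] //; case: c => [[|[|[|c]]] Hc] //;
  rewrite /xv /mu /mup /adj_pow01 /P3_adj /=; nra.
Qed.

Lemma compl3 (a c : 'I_3) : \sum_(j < 3) xv j a * xv j c = (a == c)%:R.
Proof.
have H := s2s2.
rewrite !big_ord_recl big_ord0.
case: a => [[|[|[|a]]] Ha] //; case: c => [[|[|[|c]]] Hc] //;
  rewrite /xv /=; nra.
Qed.

Definition XJ n (J u : {ffun 'I_n -> 'I_3}) : R := \prod_(i < n) xv (J i) (u i).
Definition lam n (Om : {set {ffun 'I_n -> bool}}) (J : {ffun 'I_n -> 'I_3}) : R :=
  \sum_(beta in Om) \prod_(i < n) mup (beta i) (mu (J i)).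

Lemma neps_R n (Om : {set {ffun 'I_n -> bool}}) u v :
  (neps_adj P3_adj Om u v)%:R =
  \sum_(beta in Om) \prod_(i < n) ((adj_pow01 P3_adj (beta i) (u i) (v i))%:R : R).
Proof. by rewrite /neps_adj natr_sum; apply: eq_bigr => b _; rewrite natr_prod. Qed.

Lemma eigN n (Om : {set {ffun 'I_n -> bool}}) J v :
  \sum_w XJ J w * (neps_adj P3_adj Om w v)%:R = lam Om J * XJ J v.
Proof.
rewrite /lam mulr_suml.
under eq_bigr do rewrite neps_R mulr_sumr.
rewrite exchange_big /=; apply: eq_bigr => beta _.
under eq_bigr do rewrite /XJ -big_split /=.
rewrite -(bigA_distr_bigA (fun i a => xv (J i) a * (adj_pow01 P3_adj (beta i) a (v i))%:R)) /=.
under eq_bigr do rewrite eig3.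
by rewrite big_split.
Qed.

Lemma complN n (u v : {ffun 'I_n -> 'I_3}) :
  \sum_J XJ J u * XJ J v = (u == v)%:R.
Proof.
under eq_bigr do rewrite /XJ -big_split /=.
rewrite -(bigA_distr_bigA (fun i j => xv j (u i) * xv j (v i))) /=.
under eq_bigr do rewrite compl3.
case: (eqVneq u v) => [->|neq].
  by rewrite big1 // => i _; rewrite eqxx.
have [i Hi] : exists i, u i != v i.
  apply/existsP; apply: contraR neq; rewrite negb_exists => /forallP H.
  by apply/eqP/ffunP => i; move: (H i); rewrite negbK => /eqP.
by rewrite (bigD1 i) //= (negbTE Hi) mul0r.
Qed.

Lemma powN n (Om : {set {ffun 'I_n -> bool}}) k u v :
  (mxpow (neps_adj P3_adj Om) k u v)%:R = \sum_J lam Om J ^+ k * (XJ J u * XJ J v).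
Proof.
elim: k v => [|k IH] v.
  rewrite /= -complN; apply: eq_bigr => J _; by rewrite expr0 mul1r.
rewrite /= natr_sum.
under eq_bigr do rewrite natrM IH mulr_suml.
rewrite exchange_big /=; apply: eq_bigr => J _.
transitivity (\sum_w (lam Om J ^+ k * XJ J u) * (XJ J w * (neps_adj P3_adj Om w v)%:R)).
  by apply: eq_bigr => w _; ring.
rewrite -mulr_sumr eigN exprS; ring.
Qed.

Lemma prod_form n (J : {ffun 'I_n -> 'I_3}) (beta : {ffun 'I_n -> bool}) (r : seq 'I_n) :
  exists z : int, \prod_(i <- r) mup (beta i) (mu (J i)) =
    (2 ^ (\sum_(i <- r) nat_of_bool (beta i))./2)%:R * z%:~R *
    (if odd (\sum_(i <- r) nat_of_bool (beta i)) then s2 else 1).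
Proof.
have H := s2s2.
have E1 : forall a b : R, s2 * (a * b * s2) = 2 * a * b * 1.
  by move=> a b; rewrite -H; ring.
have E2 : forall a b : R, - s2 * (a * b * s2) = 2 * a * (- b) * 1.
  by move=> a b; rewrite -H; ring.
elim: r => [|i r [z IH]].
  by exists 1; rewrite !big_nil /= !mul1r.
rewrite !big_cons; case: (beta i) => /=; last by exists z; rewrite add0n IH /mup mul1r.
rewrite -/(mup true (mu (J i))) IH.
set c := (\sum_(j <- r) nat_of_bool (beta j))%N.
rewrite uphalf_half.
case: (J i) => [[|[|[|j]]] Hj] //; rewrite /mup /mu /=.
- case Ho: (odd c) => /=.
    by exists z; rewrite expnS natrM E1.
  by exists z; rewrite add0n mulr1; ring.
- by exists 0; rewrite mul0r mulr0 mul0r.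
- case Ho: (odd c) => /=.
    by exists (- z); rewrite expnS natrM mulrNz E2.
  by exists (- z); rewrite add0n mulr1 mulrNz; ring.
Qed.

Lemma hw_sum n (beta : {ffun 'I_n -> bool}) :
  hamming_weight beta = \sum_(i < n) nat_of_bool (beta i).
Proof.
rewrite /hamming_weight -sum1dep_card big_mkcond /=.
by apply: eq_bigr => i _; case: (beta i).
Qed.

Lemma lam_even n (Om : {set {ffun 'I_n -> bool}}) J :
  [ffun _ => false] \notin Om ->
  (forall beta, beta \in Om -> ~~ odd (hamming_weight beta)) ->
  exists z : int, lam Om J = 2 * z%:~R.
Proof.
move=> H0 Hev; rewrite /lam.
apply: (big_ind (fun x => exists z : int, x = 2 * z%:~R)).
- by exists 0; rewrite mulr0.
- by move=> x y [a ->] [b ->]; exists (a + b); rewrite intrD mulrDr.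
move=> beta Hb.
have [z Hz] := prod_form J beta (index_enum 'I_n).
have He := Hev beta Hb; rewrite hw_sum in He.
rewrite Hz (negbTE He) mulr1.
set c := (\sum_(i <- index_enum 'I_n) nat_of_bool (beta i))%N in He *.
have cpos : (0 < c)%N.
  rewrite lt0n; apply: contra H0 => /eqP c0.
  suff <- : beta = [ffun _ => false] by [].
  apply/ffunP => i; rewrite ffunE.
  apply/negbTE/negP => bi.
  have : (0 < c)%N.
    rewrite /c (bigD1 i) //= bi; by [].
  by rewrite c0.
have [m Hm] : exists m, c./2 = m.+1.
  exists (c./2).-1; rewrite prednK //.
  move: cpos He; rewrite -{1}(odd_double_half c); case: (odd c) => //=.
  by rewrite add0n; case: (c./2).
exists ((2 ^ m)%N%:Z * z); rewrite Hm expnS natrM intrM -mulrA; congr (_ * _).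
Qed.

Lemma Un_cv_ext (f g : nat -> R) l : (forall n, f n = g n) -> Un_cv g l -> Un_cv f l.
Proof. by move=> E H eps He; case: (H eps He) => N HN; exists N => k Hk; rewrite E; apply: HN. Qed.

Lemma Un_cv_sum (I : Type) (r : seq I) (F : I -> nat -> R) (l : I -> R) :
  (forall i, Un_cv (F i) (l i)) ->
  Un_cv (fun N => \sum_(i <- r) F i N) (\sum_(i <- r) l i).
Proof.
move=> H; elim: r => [|i r IH].
  apply: (Un_cv_ext (g := fun _ => 0)); first by move=> k; rewrite big_nil.
  rewrite big_nil; exact: cv_const.
apply: (Un_cv_ext (g := fun N => F i N + \sum_(j <- r) F j N)).
  by move=> k; rewrite big_cons.
rewrite big_cons; exact: CV_plus.
Qed.

Lemma cos_sin_even (z : int) (x : R) : x = 2 * z%:~R ->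
  cos (PI * x) = 1 /\ sin (PI * x) = 0.
Proof.
have P : forall (k : nat) (x : R), x = 2 * k%:R -> cos (PI * x) = 1 /\ sin (PI * x) = 0.
  move=> k y ->.
  have E : Rmult PI (2 * k%:R) = Rplus 0 (Rmult (Rmult (IZR 2) (INR k)) PI).
    by rewrite (_ : IZR 2 = INR 2) // !RealsE; ring.
  by rewrite E cos_period sin_period cos_0 sin_0.
case: z => k ->.
  exact: P.
have -> : 2 * (Negz k)%:~R = - (2 * k.+1%:R) :> R by rewrite NegzE mulrNz mulrN.
rewrite -RoppE Ropp_mult_distr_r_reverse cos_neg sin_neg.
by have [-> ->] := P k.+1 _ erefl; rewrite Ropp_0.
Qed.

Lemma fst_term n (Om : {set {ffun 'I_n -> bool}}) t u v k :
  fst (exp_term (neps_adj P3_adj Om) t u v k) =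
  \sum_J (XJ J u * XJ J v) * cterm (t * lam Om J) k.
Proof.
rewrite /exp_term /cterm /Cmul; cbn [fst snd].
rewrite !RealsE powN.
under [RHS]eq_bigr do rewrite !RealsE exprMn.
rewrite (_ : R0 = 0) // mulr0 ?addr0 ?add0r ?subr0 !(mulr_sumr, mulr_suml); apply: eq_bigr => J _; ring.
Qed.

Lemma snd_term n (Om : {set {ffun 'I_n -> bool}}) t u v k :
  snd (exp_term (neps_adj P3_adj Om) t u v k) =
  \sum_J (XJ J u * XJ J v) * sterm (t * lam Om J) k.
Proof.
rewrite /exp_term /sterm /Cmul; cbn [fst snd].
rewrite !RealsE powN.
under [RHS]eq_bigr do rewrite !RealsE exprMn.
rewrite (_ : R0 = 0) // mulr0 ?addr0 ?add0r ?subr0 !(mulr_sumr, mulr_suml); apply: eq_bigr => J _; ring.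
Qed.

Lemma swap_sum (I : finType) (c : I -> R) (f : I -> nat -> R) N :
  sum_f_R0 (fun k => \sum_J c J * f J k) N = \sum_J c J * sum_f_R0 (f J) N.
Proof.
rewrite sum_f_R0E exchange_big /=; apply: eq_bigr => J _.
by rewrite sum_f_R0E mulr_sumr.
Qed.

Lemma entryN n (Om : {set {ffun 'I_n -> bool}}) u v :
  [ffun _ => false] \notin Om ->
  (forall beta, beta \in Om -> ~~ odd (hamming_weight beta)) ->
  transition_entry (neps_adj P3_adj Om) PI u v (INR (nat_of_bool (u == v)), R0).
Proof.
move=> H0 Hev.
have CS : forall J, cos (PI * lam Om J) = 1 /\ sin (PI * lam Om J) = 0.
  by move=> J; have [z Hz] := lam_even J H0 Hev; exact: cos_sin_even Hz.
split; cbn [fst snd].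
- apply: (Un_cv_ext (g := fun N => \sum_J (XJ J u * XJ J v) * sum_f_R0 (cterm (PI * lam Om J)) N)).
    by move=> N; rewrite -swap_sum !sum_f_R0E; apply: eq_bigr => k _; rewrite fst_term.
  have -> : INR (u == v) = \sum_J (XJ J u * XJ J v) * cos (PI * lam Om J).
    rewrite INRE -complN; apply: eq_bigr => J _; by rewrite (proj1 (CS J)) mulr1.
  apply: Un_cv_sum => J; apply: CV_mult; [exact: cv_const | exact: cterm_cos].
- apply: (Un_cv_ext (g := fun N => \sum_J (XJ J u * XJ J v) * sum_f_R0 (sterm (PI * lam Om J)) N)).
    by move=> N; rewrite -swap_sum !sum_f_R0E; apply: eq_bigr => k _; rewrite snd_term.
  have -> : R0 = \sum_J (XJ J u * XJ J v) * - sin (PI * lam Om J).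
    rewrite big1 // => J _; by rewrite (proj2 (CS J)) oppr0 mulr0.
  apply: Un_cv_sum => J; apply: CV_mult; [exact: cv_const | exact: sterm_sin].
Qed.

Local Close Scope ring_scope.

Theorem corollary3p5 (n : nat) (Om : {set {ffun 'I_n -> bool}}) :
  Om != set0 ->
  [ffun _ => false] \notin Om ->
  (forall beta, beta \in Om -> ~~ odd (hamming_weight beta)) ->
  (forall u v : {ffun 'I_n -> 'I_3},
     transition_entry (neps_adj P3_adj Om) PI u v
       (INR (nat_of_bool (u == v)), R0)) /\
  periodic_at (neps_adj P3_adj Om) PI.
Proof.
move=> _ H0 Hev; split.
  by move=> u v; exact: entryN.
split; first exact: PI_neq0.
exists (R1, R0); split.
  by rewrite /Cnorm2 /= Rmult_1_l Rmult_0_l Rplus_0_r.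
move=> u v.
have -> : Cmul (R1, R0) (INR (u == v), R0) = (INR (u == v), R0).
  by rewrite /Cmul /= Rmult_1_l !Rmult_0_l Rmult_0_r Rminus_0_r Rplus_0_l.
exact: entryN.
Qed.
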